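(* Let $Y$ be a random simplicial complex on $[n]=\{0,\dots,n\}$ drawn from the lower model in the medial regime, with constants $0<p\le P<1$ such that $p\le p_\sigma\le P$ for all $\sigma$. Then $Y$ is connected with probability at least $1-C\exp\!\big(-\tfrac{n^{1/2}}{2}\big)$, where $C>0$ is a constant depending on $p$ and independent of $n$.
   Context: Lower model: each non-empty proper subset $\sigma\subsetneq[n]$ is included independently with probability $p_\sigma$ into a random hypergraph $X$, and $Y$ is the largest simplicial complex contained in $X$ ($\sigma\in Y$ iff every non-empty $\tau\subseteq\sigma$ lies in $X$). Medial regime: $p,P\in(0,1)$ are independent of $n$. *)

(* Defs.v *)
From HB Require Import structures.
From mathcomp Require Import all_boot all_order all_algebra.
From mathcomp Require Import reals.
From mathcomp.analysis Require Import sequences exp.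
Set Implicit Arguments. Unset Strict Implicit. Unset Printing Implicit Defensive.
Import Order.TTheory GRing.Theory Num.Theory.
Local Open Scope ring_scope.

(* Vertex set [n] = {0,...,n} is 'I_n.+1. *)

Definition face (n : nat) (s : {set 'I_n.+1}) : bool :=
  (s != set0) && (s != setT).

Definition faces (n : nat) : {set {set 'I_n.+1}} := [set s | face s].

(* Probability weight of a hypergraph X (X \subset faces n) in the lower
   model: each face s is included independently with probability ps s. *)
Definition lower_weight (R : realType) (n : nat) (ps : {set 'I_n.+1} -> R)
  (X : {set {set 'I_n.+1}}) : R :=
  \prod_(s : {set 'I_n.+1} | face s) (if s \in X then ps s else 1 - ps s).

Definition lower_prob (R : realType) (n : nat) (ps : {set 'I_n.+1} -> R)
  (E : pred {set {set 'I_n.+1}}) : R :=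
  \sum_(X : {set {set 'I_n.+1}} | (X \subset faces n) && E X) lower_weight ps X.

(* Largest simplicial complex contained in X: the non-empty s all of whose
   non-empty subsets lie in X. *)
Definition lower_complex (n : nat) (X : {set {set 'I_n.+1}}) : {set {set 'I_n.+1}} :=
  [set s | (s != set0) &&
     [forall t : {set 'I_n.+1}, ((t != set0) && (t \subset s)) ==> (t \in X)]].

Definition complex_connected (n : nat) (Y : {set {set 'I_n.+1}}) : bool :=
  [exists i : 'I_n.+1, [set i] \in Y] &&
  [forall i : 'I_n.+1, forall j : 'I_n.+1,
     (([set i] \in Y) && ([set j] \in Y)) ==>
       connect (fun a b : 'I_n.+1 => [set a; b] \in Y) i j].

(* Main.v *)
Require Import Defs.
From HB Require Import structures.
From mathcomp Require Import all_boot all_order all_algebra.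
From mathcomp Require Import reals.
From mathcomp.analysis Require Import sequences exp.
From mathcomp Require Import ring lra.
Import Order.TTheory GRing.Theory Num.Theory.
Local Open Scope ring_scope.
Set Implicit Arguments. Unset Strict Implicit. Unset Printing Implicit Defensive.

Section Prob.
Variable (R : realType) (n : nat) (ps : {set 'I_n.+1} -> R).

Definition xs (s : {set 'I_n.+1}) (X : {set {set 'I_n.+1}}) : R := (s \in X)%:R.
Definition aw t := if face t then ps t else 0.
Definition bw t := if face t then 1 - ps t else 1.
Definition vw (X : {set {set 'I_n.+1}}) :=
  \prod_(t : {set 'I_n.+1}) (if t \in X then aw t else bw t).
Definition Ex (F : {set {set 'I_n.+1}} -> R) :=
  \sum_(X : {set {set 'I_n.+1}}) vw X * F X.

Lemma Ex_ext F G : (forall X, F X = G X) -> Ex F = Ex G.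
Proof. by move=> H; apply: eq_bigr => X _; rewrite H. Qed.

Lemma Ex1 : Ex (fun _ => 1) = 1.
Proof.
rewrite /Ex; under eq_bigr do rewrite mulr1.
rewrite /vw -(@bigA_distr R 0 1 *%R +%R).
apply: big1 => t _; rewrite /aw /bw; case: (face t) => /=; [by rewrite addrC subrK | by rewrite add0r].
Qed.

Lemma Ex_sub F G : Ex (fun X => F X - G X) = Ex F - Ex G.
Proof. by rewrite /Ex -sumrB; apply: eq_bigr => X _; rewrite mulrBr. Qed.

Lemma Ex_add F G : Ex (fun X => F X + G X) = Ex F + Ex G.
Proof. by rewrite /Ex -big_split; apply: eq_bigr => X _; rewrite mulrDr. Qed.

Lemma Ex_sum (I : Type) (r : seq I) (F : I -> {set {set 'I_n.+1}} -> R) :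
  Ex (fun X => \sum_(i <- r) F i X) = \sum_(i <- r) Ex (F i).
Proof.
rewrite /Ex; under eq_bigr do rewrite mulr_sumr.
by rewrite exchange_big.
Qed.

Lemma lower_prob_Ex E : lower_prob ps E = Ex (fun X => (E X)%:R).
Proof.
rewrite /lower_prob /Ex big_mkcond /=; apply: eq_bigr => X _.
case: (boolP (X \subset faces n)) => HX /=.
  case: (E X) => /=; last by rewrite mulr0.
  rewrite mulr1 /lower_weight /vw big_mkcond /=; apply: eq_bigr => t _.
  rewrite /aw /bw; case: (boolP (face t)) => ft //.
  have: t \notin X.
    by apply: contra ft => tX; move/subsetP: HX => /(_ t tX); rewrite inE.
  by move/negbTE => ->.
move/subsetPn: HX => [t tX]; rewrite inE => ntf.
by rewrite /vw (bigD1 t) //= tX /aw (negbTE ntf) !mul0r.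
Qed.

Lemma Ex_peel s F : face s -> (forall X, F (s |: X) = F (X :\ s)) ->
  Ex (fun X => xs s X * F X) = ps s * Ex F.
Proof.
move=> fs FF.
pose v' (X : {set {set 'I_n.+1}}) := \prod_(t | t != s) (if t \in X then aw t else bw t).
have vE (X : {set {set 'I_n.+1}}) : vw X = (if s \in X then aw s else bw s) * v' X by rewrite /vw (bigD1 s).
have v'U (X : {set {set 'I_n.+1}}) : v' (s |: X) = v' X.
  by apply: eq_bigr => t ts; rewrite in_setU1 (negbTE ts).
have FE (X : {set {set 'I_n.+1}}) : s \notin X -> F (s |: X) = F X.
  move=> sX; rewrite FF; congr F; apply/setP => t; rewrite in_setD1.
  by case: eqP => // ->; rewrite (negbTE sX).
have Hin (G : {set {set 'I_n.+1}} -> R) :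
    \sum_(X : {set {set 'I_n.+1}} | s \in X) G X = \sum_(X : {set {set 'I_n.+1}} | s \notin X) G (s |: X).
  rewrite (reindex_onto (fun X => s |: X) (fun X => X :\ s)) /=; last first.
    by move=> X sX; rewrite setD1K.
  apply: eq_bigl => X; rewrite setU11 /=.
  case: (boolP (s \in X)) => sX; last by rewrite setU1K // eqxx.
  apply/negbTE/eqP => E; have := setD11 s (s |: X); by rewrite E sX.
set T := \sum_(X : {set {set 'I_n.+1}} | s \notin X) v' X * F X.
have L1 : Ex F = aw s * T + bw s * T.
  rewrite /Ex (bigID (fun X : {set {set 'I_n.+1}} => s \in X)) /= Hin /T !mulr_sumr; congr (_ + _).
    apply: eq_bigr => X sX; rewrite vE v'U FE // setU11 mulrA //.
  by apply: eq_bigr => X sX; rewrite vE (negbTE sX) mulrA.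
rewrite L1 -mulrDl /aw /bw fs addrC subrK mul1r.
rewrite /Ex (bigID (fun X : {set {set 'I_n.+1}} => s \in X)) /= Hin /T mulr_sumr.
rewrite [X in _ + X]big1 ?addr0; last first.
  by move=> X sX; rewrite /xs (negbTE sX) mul0r mulr0.
apply: eq_bigr => X sX; rewrite vE v'U FE // /xs setU11 /aw fs mul1r mulrA //.
Qed.


Lemma xs01 s X : 0 <= xs s X <= 1.
Proof. by rewrite /xs; case: (s \in X) => /=; rewrite ?lexx ?ler01. Qed.

Lemma fac01 (gl : seq {set 'I_n.+1}) X : 0 <= 1 - \prod_(s <- gl) xs s X <= 1.
Proof.
apply/andP; split; first by rewrite subr_ge0 prodr_ile1 // => i _; exact: xs01.
by rewrite lerBlDr lerDl prodr_ge0 // => i _; case/andP: (xs01 i X).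
Qed.

Lemma prod_fac_ge0 (I : Type) (r : seq I) (g : I -> seq {set 'I_n.+1}) X :
  0 <= \prod_(i <- r) (1 - \prod_(s <- g i) xs s X).
Proof. by apply: prodr_ge0 => i _; case/andP: (fac01 (g i) X). Qed.

Lemma prod_const_seq (I : Type) (r : seq I) (c : R) : \prod_(i <- r) c = c ^+ size r.
Proof. by elim: r => [|a r IH]; rewrite ?big_nil ?expr0 // big_cons IH exprS. Qed.

Variable (p : R).
Hypothesis Hp0 : 0 <= p.
Hypothesis Hp1 : p <= 1.
Hypothesis Hps : forall s, face s -> p <= ps s <= 1.

Lemma vw_ge0 X : 0 <= vw X.
Proof.
apply: prodr_ge0 => t _; rewrite /aw /bw.
case: (boolP (face t)) => ft; case: (t \in X) => //=.
- by case/andP: (Hps ft) => H _; exact: le_trans H.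
- by case/andP: (Hps ft) => _ H; rewrite subr_ge0.
Qed.

Lemma Ex_le F G : (forall X, F X <= G X) -> Ex F <= Ex G.
Proof. by move=> H; apply: ler_sum => X _; apply: ler_wpM2l; [exact: vw_ge0 | exact: H]. Qed.

Lemma Ex_ge0 F : (forall X, 0 <= F X) -> 0 <= Ex F.
Proof. by move=> H; apply: sumr_ge0 => X _; apply: mulr_ge0 (vw_ge0 X) (H X). Qed.

Lemma Ex0 : Ex (fun _ => 0) = 0.
Proof. by apply: big1 => X _; rewrite mulr0. Qed.

Lemma Ex_mono (gl : seq {set 'I_n.+1}) F : uniq gl -> (forall s, s \in gl -> face s) ->
  (forall s, s \in gl -> forall X, F (s |: X) = F (X :\ s)) ->
  Ex (fun X => (\prod_(s <- gl) xs s X) * F X) = (\prod_(s <- gl) ps s) * Ex F.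
Proof.
elim: gl F => [|s gl IH] F /= Hu Hf Hi.
  by rewrite big_nil mul1r; apply: Ex_ext => X; rewrite big_nil mul1r.
case/andP: Hu => sgl Hu.
rewrite big_cons -mulrA -(IH F Hu); first last.
- by move=> t tg; apply: Hi; rewrite inE tg orbT.
- by move=> t tg; apply: Hf; rewrite inE tg orbT.
rewrite -(Ex_peel (F := fun X => (\prod_(s <- gl) xs s X) * F X)); first last.
- move=> X; rewrite (Hi s (mem_head _ _) X); congr (_ * _).
  apply: eq_big_seq => t tg; rewrite /xs in_setU1 in_setD1.
  have -> : (t == s) = false by apply/negbTE; apply: contra sgl => /eqP <-.
  by [].
- by apply: Hf; rewrite mem_head.
by apply: Ex_ext => X; rewrite big_cons mulrA.
Qed.

Lemma prod_ge_pow (gl : seq {set 'I_n.+1}) : (forall s, s \in gl -> face s) ->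
  p ^+ size gl <= \prod_(s <- gl) ps s.
Proof.
elim: gl => [|s gl IH] H /=; first by rewrite big_nil expr0.
rewrite big_cons exprS; apply: ler_pM => //; first exact: exprn_ge0.
  by case/andP: (Hps (H s (mem_head _ _))).
by apply: IH => t tg; apply: H; rewrite inE tg orbT.
Qed.

Lemma Ex_groups (I : eqType) (r : seq I) (g : I -> seq {set 'I_n.+1}) :
  uniq r -> (forall i, i \in r -> uniq (g i)) ->
  (forall i s, i \in r -> s \in g i -> face s) ->
  (forall i i' s, i \in r -> i' \in r -> i != i' -> s \in g i -> s \notin g i') ->
  Ex (fun X => \prod_(i <- r) (1 - \prod_(s <- g i) xs s X))
    <= \prod_(i <- r) (1 - p ^+ size (g i)).
Proof.
elim: r => [|a r IH] /= Hu Hg Hf Hd.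
  rewrite big_nil (@Ex_ext _ (fun _ => 1)) ?Ex1 // => X; by rewrite big_nil.
case/andP: Hu => ar Hu.
set Rr := fun X => \prod_(i <- r) (1 - \prod_(s <- g i) xs s X).
have E1 : Ex (fun X => \prod_(i <- a :: r) (1 - \prod_(s <- g i) xs s X)) =
   Ex Rr - Ex (fun X => (\prod_(s <- g a) xs s X) * Rr X).
  by rewrite -Ex_sub; apply: Ex_ext => X; rewrite big_cons mulrBl mul1r.
rewrite E1 Ex_mono; first last.
- move=> s sga X; rewrite /Rr; apply: eq_big_seq => i ir; congr (1 - _).
  apply: eq_big_seq => t ti; rewrite /xs in_setU1 in_setD1.
  have ai : a != i by apply: contra ar => /eqP ->.
  have ir' : i \in a :: r by rewrite inE ir orbT.
  have sgi := Hd a i s (mem_head _ _) ir' ai sga.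
  have -> : (t == s) = false by apply/eqP => ts; move: sgi; rewrite -ts ti.
  by [].
- by move=> s sga; apply: (Hf a); rewrite ?mem_head.
- by apply: Hg; rewrite mem_head.
rewrite big_cons -{1}(mul1r (Ex Rr)) -mulrBl.
have ERr : 0 <= Ex Rr by apply: Ex_ge0 => X; exact: prod_fac_ge0.
apply: le_trans (ler_wpM2r ERr _) (ler_wpM2l _ (IH _ _ _ _)).
- by rewrite lerD2l lerN2; apply: prod_ge_pow => s sga; apply: (Hf a); rewrite ?mem_head.
- by rewrite subr_ge0; apply: exprn_ile1.
- exact: Hu.
- by move=> i ir; apply: Hg; rewrite inE ir orbT.
- by move=> i s ir; apply: Hf; rewrite inE ir orbT.
- by move=> i i' s ir i'r; apply: Hd; rewrite inE ?ir ?i'r orbT.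
Qed.

End Prob.

Section Comb.
Variable (R : realType) (n : nat).

Lemma sub_pair (X : {set {set 'I_n.+1}}) (t : {set 'I_n.+1}) i k :
  t != set0 -> t \subset [set i; k] -> [set i] \in X -> [set k] \in X ->
  [set i; k] \in X -> t \in X.
Proof.
move=> tn ts Hi Hk Hik.
have mem x : x \in t -> (x == i) || (x == k).
  by move=> xt; have := subsetP ts x xt; rewrite !inE.
case: (boolP (i \in t)) => it; case: (boolP (k \in t)) => kt.
- suff -> : t = [set i; k] by [].
  apply/setP => x; rewrite !inE; apply/idP/idP; first exact: mem.
  by case/orP => /eqP ->.
- suff -> : t = [set i] by [].
  apply/setP => x; rewrite !inE; apply/idP/idP; last by move/eqP ->.
  by move=> xt; case/orP: (mem x xt) => // /eqP xk; move: kt; rewrite -xk xt.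
- suff -> : t = [set k] by [].
  apply/setP => x; rewrite !inE; apply/idP/idP; last by move/eqP ->.
  by move=> xt; case/orP: (mem x xt) => // /eqP xk; move: it; rewrite -xk xt.
- case/set0Pn: tn => x xt; case/orP: (mem x xt) => /eqP xe.
    by move: it; rewrite -xe xt.
  by move: kt; rewrite -xe xt.
Qed.

Lemma memY (X : {set {set 'I_n.+1}}) s :
  (s \in lower_complex X) =
  (s != set0) && [forall t : {set 'I_n.+1}, ((t != set0) && (t \subset s)) ==> (t \in X)].
Proof. by rewrite inE. Qed.

Lemma set1_n0 (i : 'I_n.+1) : [set i] != set0.
Proof. by apply/set0Pn; exists i; rewrite inE. Qed.

Lemma V1 (X : {set {set 'I_n.+1}}) (i : 'I_n.+1) : ([set i] \in lower_complex X) = ([set i] \in X).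
Proof.
rewrite memY set1_n0 /=; apply/forallP/idP.
  by move=> /(_ [set i]); rewrite set1_n0 subxx.
move=> Hi t; apply/implyP => /andP [tn ts].
by apply: (sub_pair (i := i) (k := i)); rewrite ?setUid.
Qed.

Lemma E2 (X : {set {set 'I_n.+1}}) (i k : 'I_n.+1) : [set i] \in X -> [set k] \in X -> [set i; k] \in X ->
  [set i; k] \in lower_complex X.
Proof.
move=> Hi Hk Hik; rewrite memY; apply/andP; split.
  by apply/set0Pn; exists i; rewrite !inE eqxx.
apply/forallP => t; apply/implyP => /andP [tn ts]; exact: sub_pair Hi Hk Hik.
Qed.

Definition NS (X : {set {set 'I_n.+1}}) : R :=
  \prod_(i <- enum 'I_n.+1) (1 - \prod_(s <- [:: [set i]]) xs R s X).
Definition gP (i j k : 'I_n.+1) := [:: [set k]; [set i; k]; [set j; k]].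
Definition PP (i j : 'I_n.+1) (X : {set {set 'I_n.+1}}) : R :=
  \prod_(k <- enum ([set: 'I_n.+1] :\ i :\ j)) (1 - \prod_(s <- gP i j k) xs R s X).
Definition QQ (i j : 'I_n.+1) X : R := if i != j then PP i j X else 0.

Lemma QQ_ge0 i j (X : {set {set 'I_n.+1}}) : 0 <= QQ i j X.
Proof. rewrite /QQ; case: ifP => _ //; rewrite /PP; exact: (prod_fac_ge0 R _ (gP i j) X). Qed.

Lemma le_sum_seq (I : eqType) (r : seq I) (F : I -> R) i :
  uniq r -> i \in r -> (forall j, 0 <= F j) -> F i <= \sum_(j <- r) F j.
Proof.
move=> ur ir H; rewrite (bigD1_seq i) //=; rewrite lerDl.
by apply: sumr_ge0 => j _.
Qed.

Lemma bad_bound (X : {set {set 'I_n.+1}}) :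
  (~~ complex_connected (lower_complex X))%:R
    <= NS X + \sum_(i <- enum 'I_n.+1) \sum_(j <- enum 'I_n.+1) QQ i j X.
Proof.
have NS0 : 0 <= NS X by apply: prod_fac_ge0.
have S0 : 0 <= \sum_(i <- enum 'I_n.+1) \sum_(j <- enum 'I_n.+1) QQ i j X.
  by apply: sumr_ge0 => i _; apply: sumr_ge0 => j _; exact: QQ_ge0.
case Hc: (complex_connected (lower_complex X)) => /=; first exact: addr_ge0.
move/negbT: Hc; rewrite negb_and => /orP [Hne | Hnf].
  have -> : NS X = 1.
    rewrite /NS; apply: big1_seq => i _; rewrite big_cons big_nil /xs.
    move: Hne; rewrite negb_exists => /forallP /(_ i); rewrite V1 => /negbTE ->.
    by rewrite mulr1 subr0.
  by rewrite lerDl.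
move: Hnf; rewrite negb_forall => /existsP [i]; rewrite negb_forall => /existsP [j].
rewrite negb_imply => /andP [/andP [Yi Yj] Nc].
have ij : i != j by apply: contra Nc => /eqP ->; rewrite connect0.
have HQ : QQ i j X = 1.
  rewrite /QQ ij /PP; apply: big1_seq => k /andP [_ kr].
  move: kr; rewrite mem_enum !inE => /andP [kj /andP [ki _]].
  rewrite /gP !big_cons big_nil /xs.
  rewrite V1 in Yi; rewrite V1 in Yj.
  case Hk: ([set k] \in X); case Hik: ([set i; k] \in X);
    case Hjk: ([set j; k] \in X); rewrite /= ?mul0r ?mulr0 ?subr0 //.
  exfalso; move/negP: Nc; apply.
  apply: (connect_trans (y := k)); apply: connect1 => /=.
    exact: E2.
  by rewrite setUC; apply: E2.
rewrite -HQ.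
apply: (@le_trans _ _ (\sum_(i <- enum 'I_n.+1) \sum_(j <- enum 'I_n.+1) QQ i j X)); last first.
  by rewrite lerDr.
apply: (@le_trans _ _ (\sum_(j <- enum 'I_n.+1) QQ i j X)).
  by apply: (le_sum_seq (F := fun j => QQ i j X)); rewrite ?enum_uniq ?mem_enum // => k; exact: QQ_ge0.
apply: (le_sum_seq (F := fun i => \sum_(j <- enum 'I_n.+1) QQ i j X)); rewrite ?enum_uniq ?mem_enum //.
by move=> k; apply: sumr_ge0 => l _; exact: QQ_ge0.
Qed.
End Comb.

Lemma analytic (R : realType) (q : R) (N : nat) : 0 < q -> q < 1 ->
  (N.+1%:R : R) ^+ 2 * q ^+ N <=
    expR (81 / (16 * (- ln q))) * expR (- (Num.sqrt (N%:R : R) / 2)).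
Proof.
move=> q0 q1.
set c := - ln q.
have c0 : 0 < c by rewrite /c oppr_gt0; apply: ln_lt0; rewrite q0 q1.
set s := Num.sqrt (N%:R : R).
have s0 : 0 <= s by exact: sqrtr_ge0.
have s2 : s ^+ 2 = N%:R by rewrite sqr_sqrtr // ler0n.
have h1 : (N.+1%:R : R) <= expR s ^+ 2.
  apply: (@le_trans _ _ ((1 + s) ^+ 2)).
    have -> : (1 + s) ^+ 2 = 1 + 2 * s + s ^+ 2 by ring.
    rewrite s2 -natr1; lra.
  rewrite lerXn2r // ?nnegrE ?expR_ge0 //; last exact: expR_ge1Dx.
  by apply: addr_ge0.
have h2 : (N.+1%:R : R) ^+ 2 <= expR (4%:R * s).
  rewrite expRM_natl (_ : 4 = 2 * 2)%N // exprM.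
  by rewrite lerXn2r // nnegrE ?ler0n ?exprn_ge0 ?expR_ge0.
have h3 : q ^+ N = expR (N%:R * (- c)).
  by rewrite expRM_natl /c opprK lnK // posrE.
rewrite h3 -expRD.
apply: (@le_trans _ _ (expR (4%:R * s) * expR (N%:R * - c))).
  by apply: ler_wpM2r; [exact: expR_ge0 | exact: h2].
rewrite -expRD ler_expR -s2.
rewrite -subr_ge0.
have -> : 81 / (16 * c) + - (s / 2) - (4%:R * s + s ^+ 2 * - c) =
          (4%:R * c * s - 9) ^+ 2 / (16 * c).
  field; lra.
by apply: divr_ge0; [exact: sqr_ge0 | lra].
Qed.

Lemma face_of (n : nat) (s : {set 'I_n.+1}) x y : x \in s -> y \notin s -> face s.
Proof.
move=> xs ys; rewrite /face; apply/andP; split; first by apply/set0Pn; exists x.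
by apply: contra ys => /eqP ->; rewrite inE.
Qed.

Lemma neq_of (n : nat) (A B : {set 'I_n.+1}) x : x \in A -> x \notin B -> A != B.
Proof. by move=> xA xB; apply: contra xB => /eqP <-. Qed.

Lemma sum_const_seq (R : realType) (I : Type) (r : seq I) (c : R) :
  \sum_(i <- r) c = c *+ size r.
Proof. by elim: r => [|a r IH]; rewrite ?big_nil ?mulr0n // big_cons IH mulrS. Qed.

Theorem corollary6p2 (R : realType) (p : R) (hp0 : 0 < p) (hp1 : p < 1) :
  exists C : R, 0 < C /\
    forall (P : R), p <= P -> P < 1 ->
    forall (n : nat) (ps : {set 'I_n.+1} -> R),
      (forall s : {set 'I_n.+1}, face s -> p <= ps s <= P) ->
      1 - C * expR (- (Num.sqrt (n%:R : R) / 2))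
        <= lower_prob ps (fun X => complex_connected (lower_complex X)).
Proof.
set q := 1 - p ^+ 3.
have p3 : 0 < p ^+ 3 by apply: exprn_gt0.
have p31 : p ^+ 3 < 1 by rewrite exprn_ilt1 // ltW.
have q0 : 0 < q by rewrite /q subr_gt0.
have q1 : q < 1 by rewrite /q ltrBlDr ltrDl.
set K := expR (81 / (16 * (- ln q))).
have K0 : 0 < K by apply: expR_gt0.
have qi0 : 0 < q^-1 by rewrite invr_gt0.
have qi1 : 1 <= q^-1 by rewrite invr_ge1 ?ltW // unitfE gt_eqF.
exists (1 + 2 * q^-1 * K); split.
  by apply: addr_gt0 => //; apply: mulr_gt0 => //; apply: mulr_gt0.
move=> P pP P1 n ps Hps0.
have Hp0 : 0 <= p by apply: ltW.
have Hp1 : p <= 1 by apply: ltW.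
have Hps : forall s, face s -> p <= ps s <= 1.
  move=> s fs; case/andP: (Hps0 s fs) => a b; rewrite a /=.
  by apply: le_trans b (ltW P1).
have E0 : 0 < expR (- (Num.sqrt (n%:R : R) / 2)) by apply: expR_gt0.
rewrite lower_prob_Ex.
case: n ps Hps0 Hps E0 => [|m] ps Hps0 Hps E0.
  apply: (@le_trans _ _ 0).
    rewrite sqrtr0 mul0r oppr0 expR0 mulr1 subr_le0 lerDl.
    by apply: mulr_ge0; [apply: mulr_ge0; lra|lra].
  apply: (Ex_ge0 Hp0 Hps) => X; by case: (complex_connected _).
set N := m.+1.
have -> : Ex ps (fun X => (complex_connected (lower_complex X))%:R) =
   Ex ps (fun _ => 1) - Ex ps (fun X => (~~ complex_connected (lower_complex X))%:R).
  rewrite -Ex_sub; apply: Ex_ext => X.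
  by case: (complex_connected (lower_complex X)); rewrite /= ?subr0 ?subrr.
rewrite Ex1.
rewrite lerD2l lerN2.
set A := (N.+1%:R : R) ^+ 2 * q ^+ N.
have HA := analytic N q0 q1.
have B1 : Ex ps (fun X => (~~ complex_connected (lower_complex X))%:R) <=
    Ex ps (NS R (n := N)) + \sum_(i <- enum 'I_N.+1) \sum_(j <- enum 'I_N.+1) Ex ps (QQ R i j).
  apply: le_trans (Ex_le Hp0 Hps (@bad_bound R N)) _.
  rewrite Ex_add Ex_sum; apply: lerD => //; apply: ler_sum => i _.
  by rewrite Ex_sum.
have B2 : Ex ps (NS R (n := N)) <= (1 - p) ^+ N.+1.
  apply: le_trans (Ex_groups Hp0 Hp1 Hps (r := enum 'I_N.+1) (g := fun i => [:: [set i]]) _ _ _ _) _.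
  - exact: enum_uniq.
  - by [].
  - move=> i s _; rewrite inE => /eqP ->.
    apply: (face_of (x := i) (y := if i == ord0 then ord_max else ord0)); first by rewrite inE.
    case: (boolP (i == ord0)) => [/eqP ->|i0]; rewrite !inE; first by [].
    by apply/eqP => h; move: i0; rewrite -h eqxx.
  - move=> i i' s _ _ ii'; rewrite !inE => /eqP -> ; apply: (neq_of (x := i)); rewrite !inE //.
  - by rewrite (eq_bigr (fun _ => 1 - p)) ?prod_const_seq ?size_enum_ord // => i _; rewrite expr1.
have B3 : forall i j : 'I_N.+1, Ex ps (QQ R i j) <= q ^+ m.
  move=> i j; rewrite /QQ; case: (boolP (i != j)) => ij; last first.
    by rewrite (@Ex_ext _ _ _ _ (fun _ => 0)) ?Ex0 ?exprn_ge0 ?ltW.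
  rewrite (@Ex_ext _ _ _ _ (PP R i j)) //.
  apply: le_trans (Ex_groups Hp0 Hp1 Hps (r := enum ([set: 'I_N.+1] :\ i :\ j)) (g := gP i j) _ _ _ _) _.
  - exact: enum_uniq.
  - move=> k; rewrite mem_enum !inE => /andP [kj /andP [ki _]].
    have ik : i != k by rewrite eq_sym.
    have jk : j != k by rewrite eq_sym.
    have ab : [set i; k] != [set k] by apply: (neq_of (x := i)); rewrite !inE ?eqxx ?ik.
    have ac : [set j; k] != [set k] by apply: (neq_of (x := j)); rewrite !inE ?eqxx ?jk.
    have bc : [set i; k] != [set j; k].
      by apply: (neq_of (x := i)); rewrite !inE ?eqxx // negb_or ij ik.
    by rewrite /gP /= !inE !negb_or (eq_sym [set k]) ab (eq_sym [set k]) ac bc.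
  - move=> k s; rewrite mem_enum !inE => /andP [kj /andP [ki _]].
    move=> /orP [/eqP ->|/orP [/eqP ->|/eqP ->]].
    + by apply: (face_of (x := k) (y := i)); rewrite !inE ?eqxx // eq_sym.
    + by apply: (face_of (x := k) (y := j)); rewrite !inE ?eqxx ?orbT // negb_or eq_sym ij eq_sym.
    + by apply: (face_of (x := k) (y := i)); rewrite !inE ?eqxx ?orbT // negb_or ij eq_sym.
  - move=> k k' s; rewrite !mem_enum !inE => /andP [kj /andP [ki _]] /andP [k'j /andP [k'i _]] kk'.
    move=> Hs; have kin : k \in s.
      by move: Hs => /orP [/eqP ->|/orP [/eqP ->|/eqP ->]]; rewrite !inE eqxx ?orbT.
    apply/negP => /orP [/eqP E|/orP [/eqP E|/eqP E]];
      move: kin; rewrite E !inE; by rewrite ?(negbTE kk') ?(negbTE ki) ?(negbTE kj).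
  - rewrite (eq_bigr (fun _ => 1 - p ^+ 3)) // prod_const_seq -cardE.
    have Hc : #|[set: 'I_N.+1] :\ i :\ j| = m.
      have := cardsD1 i [set: 'I_N.+1]; have := cardsD1 j ([set: 'I_N.+1] :\ i).
      rewrite !inE eq_sym ij cardsT card_ord /= => H1 H2.
      rewrite H1 in H2; move: H2; rewrite /N !add1n; by move=> [].
    by rewrite Hc.
apply: le_trans B1 _.
have qm : q ^+ m = q ^+ N * q^-1 by rewrite /N exprSr mulrK // unitfE gt_eqF.
apply: (@le_trans _ _ ((1 - p) ^+ N.+1 + A * q^-1)).
  apply: lerD => //.
  apply: (@le_trans _ _ (\sum_(i <- enum 'I_N.+1) \sum_(j <- enum 'I_N.+1) q ^+ m)).
    by apply: ler_sum => i _; apply: ler_sum => j _.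
  rewrite sum_const_seq sum_const_seq size_enum_ord /A qm.
  suff -> : q ^+ N * q^-1 *+ N.+1 *+ N.+1 = (N.+1%:R : R) ^+ 2 * q ^+ N * q^-1 by [].
  by rewrite -mulrnA -mulrA expr2 -natrM mulr_natl.
have t1 : (1 - p) ^+ N.+1 <= A.
  apply: (@le_trans _ _ (q ^+ N)).
    apply: (@le_trans _ _ (q ^+ N.+1)).
      rewrite lerXn2r // ?nnegrE; try lra.
      rewrite /q lerD2l lerN2.
      by rewrite -[leRHS]expr1 ler_wiXn2l.
    by rewrite ler_wiXn2l // ltW.
  rewrite /A -[leLHS]mul1r; apply: ler_wpM2r; first by rewrite exprn_ge0 // ltW.
  by rewrite exprn_ege1 // ler1n.
have A0 : 0 <= A by rewrite /A mulr_ge0 // exprn_ge0 // ltW.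
have HA' : A * q^-1 <= K * expR (- (Num.sqrt (N%:R : R) / 2)) * q^-1.
  by apply: ler_wpM2r; [lra | exact: HA].
have HA2 : A <= A * q^-1 by rewrite -[leLHS]mulr1 ler_wpM2l.
set Ee := expR (- (Num.sqrt (N%:R : R) / 2)) in E0 HA HA' *.
have HZ : K * Ee * q^-1 = q^-1 * K * Ee by rewrite mulrC mulrA.
rewrite HZ in HA'.
have HB : (1 - p) ^+ N.+1 <= q^-1 * K * Ee by apply: le_trans t1 (le_trans HA2 HA').
rewrite mulrDl mul1r.
have HE : 0 <= Ee by apply: ltW.
set Z := q^-1 * K * Ee in HB HA' *.
have -> : 2 * q^-1 * K * Ee = Z + Z by rewrite /Z -mulrA -mulrA mulr2n mulrDl !mul1r mulrA.
apply: (@le_trans _ _ (Z + Z)); first exact: lerD.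
by rewrite lerDr.
Qed.
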